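(* Let $\mathcal{X}\subset\mathbb{R}^d$, $\mathcal{Y}=\{1,\dots,c\}$, and let $D$ be a distribution on $\mathcal{X}\times\mathcal{Y}$ that is $k$-separable with $\delta$-margin (for some $\delta>0$), witnessed by a unit vector $a\in\mathbb{R}^d$, constants $b_1<b_2<\cdots<b_{k+1}$ and labels $y_1,\dots,y_k\in\mathcal{Y}$ as in the definition below. Let $f:\mathcal{Y}\to\mathbb{R}^m$ be injective, and regard $f(y)$ as the desired output for an input $x$ with label $y$. Define $W\in\mathbb{R}^{k\times m}$ to be the matrix whose first row is $f(y_1)^T$ and whose $i$-th row, for $2\le i\le k$, is $f(y_i)^T-f(y_{i-1})^T$; write $W=[w_1\;w_2\;\cdots\;w_m]$ with columns $w_j\in\mathbb{R}^k$, and assume $\max_j\|w_j\|_2>0$. Fix $\epsilon>0$ and set $$c_s=\frac{1}{\delta}\log\!\left(\frac{\sqrt{k}\,\max_{1\le j\le m}\|w_j\|_2}{\epsilon}\right).$$ Define the 2-layer network $g:\mathcal{X}\to\mathbb{R}^m$ by $$g(x)=W^T\big(\rho(c_s a^Tx-c_sb_1),\ \rho(c_s a^Tx-c_sb_2),\ \dots,\ \rho(c_s a^Tx-c_sb_k)\big)^T .$$ Then $$\mathbb{P}_{(x,y)\sim D}\Big(\max_{1\le j\le m}|g_j(x)-f_j(y)|>\epsilon\Big)=0,$$ where $g_j,f_j$ denote $j$-th components. This network is specified by $d+(m+1)k$ real parameters (the $d$ entries of $c_sa$, the $k$ hidden biases $c_sb_1,\dots,c_sb_k$, and the $mk$ entries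 of $W$).
   Context: $\rho(t)=1/(1+e^{-t})$ is the sigmoid function. Definition ($k$-separable with $\delta$-margin): Let $\mathcal{X}\subset\mathbb{R}^d$ and $\mathcal{Y}=\{1,\dots,c\}$. A distribution $D$ over $\mathcal{X}\times\mathcal{Y}$ is $k$-separable with $\delta$-margin ($\delta>0$) if there exist a projection vector $a\in\mathbb{R}^d$ with $\|a\|_2=1$ and constants $b_1<b_2<\cdots<b_{k+1}$ such that, setting $\mathcal{X}_i=\{x\in\mathcal{X}: b_i+\delta<a^Tx<b_{i+1}-\delta\}$ for $i\in\{1,\dots,k\}$: (i) for each $i$ there is $y_i\in\mathcal{Y}$ with $\mathbb{P}_{(x,y)\sim D}(y=y_i\mid x\in\mathcal{X}_i)=1$; (ii) $\mathbb{P}_{(x,y)\sim D}\big(x\in\bigcup_{i=1}^k\mathcal{X}_i\big)=1$. The number $k$ of intervals may exceed the number $c$ of labels. *)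

(* Defs.v *)
From Stdlib Require Import Reals Lra.
Open Scope R_scope.

(** Sample space: points x of R^d are represented as functions nat -> R,
    of which only the coordinates 0..d-1 are used; labels are nats. *)
Definition vec := nat -> R.
Definition sample := (vec * nat)%type.

Fixpoint rsum (n : nat) (F : nat -> R) : R :=
  match n with O => 0 | S n' => rsum n' F + F n' end.

(** max_{i<n} F i, with the convention max over the empty range = 0
    (only applied to nonnegative quantities). *)
Fixpoint rmax (n : nat) (F : nat -> R) : R :=
  match n with O => 0 | S O => F O | S n' => Rmax (rmax n' F) (F n') end.

Definition dot (d : nat) (a x : vec) : R := rsum d (fun i => a i * x i).
Definition norm2 (d : nat) (a : vec) : R := sqrt (rsum d (fun i => a i ^ 2)).

Definition rho (t : R) : R := 1 / (1 + exp (- t)).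

Record distribution (T : Type) := {
  meas : (T -> Prop) -> Prop;
  Pr : (T -> Prop) -> R;
  meas_full : meas (fun _ => True);
  meas_compl : forall A, meas A -> meas (fun t => ~ A t);
  meas_cunion : forall A : nat -> T -> Prop,
      (forall n, meas (A n)) -> meas (fun t => exists n, A n t);
  meas_ext : forall A B, (forall t, A t <-> B t) -> meas A -> meas B;
  Pr_ext : forall A B, (forall t, A t <-> B t) -> Pr A = Pr B;
  Pr_nonneg : forall A, meas A -> 0 <= Pr A;
  Pr_full : Pr (fun _ => True) = 1;
  Pr_cadd : forall A : nat -> T -> Prop,
      (forall n, meas (A n)) ->
      (forall n m t, n <> m -> A n t -> A m t -> False) ->
      infinite_sum (fun n => Pr (A n)) (Pr (fun t => exists n, A n t))
}.
Arguments meas {T} d _.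
Arguments Pr {T} d _.

(** The i-th region X_i (i = 0..k-1 here, i.e. paper's index i+1):
    x in X with b_i + delta < a^T x < b_{i+1} - delta. *)
Definition region (d : nat) (X : vec -> Prop) (a b : vec) (delta : R)
  (i : nat) (x : vec) : Prop :=
  X x /\ b i + delta < dot d a x < b (S i) - delta.

Definition distribution_on (D : distribution sample) (X : vec -> Prop) (c : nat)
  : Prop :=
  let S := fun z : sample => X (fst z) /\ (1 <= snd z <= c)%nat in
  meas D S /\ Pr D S = 1.

(** D is k-separable with delta-margin, witnessed by a, b_1<...<b_{k+1}
    (indexed b 0 .. b k) and labels y_1..y_k (indexed y 0 .. y (k-1)). *)
Definition k_separable_witness (D : distribution sample) (X : vec -> Prop)
  (d c k : nat) (delta : R) (a b : vec) (y : nat -> nat) : Prop :=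
  0 < delta /\
  norm2 d a = 1 /\
  (forall i, (i < k)%nat -> b i < b (S i)) /\
  (forall i, (i < k)%nat -> (1 <= y i <= c)%nat) /\
  (forall i, (i < k)%nat ->
     let Xi := fun z : sample => region d X a b delta i (fst z) in
     let XiY := fun z : sample => Xi z /\ snd z = y i in
     meas D Xi /\ meas D XiY /\
     (0 < Pr D Xi -> Pr D XiY / Pr D Xi = 1)) /\
  (let U := fun z : sample =>
      exists i, (i < k)%nat /\ region d X a b delta i (fst z) in
   meas D U /\ Pr D U = 1).

(** The matrix W (k x m): row 0 is f(y_1)^T, row i is f(y_{i+1})^T - f(y_i)^T.
    f y j is the j-th component (j < m) of f(y). *)
Definition Wmat (f : nat -> nat -> R) (y : nat -> nat) (i j : nat) : R :=
  match i with
  | O => f (y O) j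
  | S i' => f (y i) j - f (y i') j
  end.

Definition colnorm (k : nat) (f : nat -> nat -> R) (y : nat -> nat) (j : nat) : R :=
  sqrt (rsum k (fun i => Wmat f y i j ^ 2)).

Definition maxcol (k m : nat) (f : nat -> nat -> R) (y : nat -> nat) : R :=
  rmax m (colnorm k f y).

Definition c_s (k m : nat) (f : nat -> nat -> R) (y : nat -> nat)
  (delta eps : R) : R :=
  / delta * ln (sqrt (INR k) * maxcol k m f y / eps).

Definition gnet (d k : nat) (f : nat -> nat -> R) (y : nat -> nat)
  (a b : vec) (cs : R) (x : vec) (j : nat) : R :=
  rsum k (fun i => Wmat f y i j * rho (cs * dot d a x - cs * b i)).

(* Main.v *)
Require Import Defs.
From Stdlib Require Import Reals Lra Lia Classical.
Open Scope R_scope.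

Lemma meas_union2 T (D : distribution T) A B :
  meas D A -> meas D B -> meas D (fun t => A t \/ B t).
Proof.
  intros HA HB.
  apply (meas_ext _ D (fun t => exists n:nat, (if Nat.eqb n 0 then A else B) t)).
  - intros t; split.
    + intros [n H]. destruct (Nat.eqb n 0); auto.
    + intros [H|H]; [exists 0%nat|exists 1%nat]; simpl; auto.
  - apply meas_cunion. intros n; destruct (Nat.eqb n 0); auto.
Qed.

Lemma meas_inter T (D : distribution T) A B :
  meas D A -> meas D B -> meas D (fun t => A t /\ B t).
Proof.
  intros HA HB.
  apply (meas_ext _ D (fun t => ~ (~ A t \/ ~ B t))).
  - intros t; split; [intros H; split; apply NNPP; tauto | tauto].
  - apply meas_compl, meas_union2; apply meas_compl; auto.
Qed.

Lemma meas_empty T (D : distribution T) : meas D (fun _ => False).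
Proof.
  apply (meas_ext _ D (fun _ => ~ True)). tauto. apply meas_compl, meas_full.
Qed.

Lemma Pr_empty T (D : distribution T) : Pr D (fun _ => False) = 0.
Proof.
  set (p := Pr D (fun _ => False)).
  assert (H := Pr_cadd _ D (fun _ _ => False) (fun _ => meas_empty T D)
     (fun n m t _ H _ => H)).
  rewrite (Pr_ext _ D _ (fun _ => False)) in H
    by (intros; split; [intros [_ h]; exact h | tauto]).
  fold p in H.
  assert (p >= 0) by (apply Rle_ge, Pr_nonneg, meas_empty).
  destruct (Rle_or_lt p 0) as [H1|H1]. lra.
  destruct (H p H1) as [N HN]. specialize (HN (S N) (le_S _ _ (le_n N))).
  unfold R_dist in HN. rewrite sum_cte in HN.
  rewrite !S_INR in HN. pose proof (pos_INR N).
  rewrite Rabs_right in HN by nra. nra.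
Qed.

Lemma Pr_add2 T (D : distribution T) A B :
  meas D A -> meas D B -> (forall t, A t -> B t -> False) ->
  Pr D (fun t => A t \/ B t) = Pr D A + Pr D B.
Proof.
  intros HA HB Hd.
  set (C := fun n : nat => match n with 0%nat => A | 1%nat => B | _ => fun _ => False end).
  assert (Hm : forall n, meas D (C n)) by
    (intros [|[|n]]; simpl; auto; apply meas_empty).
  assert (Hdis : forall n m t, n <> m -> C n t -> C m t -> False).
  { intros [|[|n]] [|[|m]] t; simpl; intros; try lia; eauto. }
  assert (H := Pr_cadd _ D C Hm Hdis).
  rewrite (Pr_ext _ D _ (fun t => A t \/ B t)) in H.
  2:{ intros t; split. intros [[|[|n]] h]; simpl in h; tauto.
      intros [h|h]; [exists 0%nat|exists 1%nat]; exact h. }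
  apply (uniqueness_sum _ _ _ H).
  intros eps Heps. exists 1%nat. intros n Hn.
  assert (E : forall n, sum_f_R0 (fun n => Pr D (C n)) (S n) = Pr D A + Pr D B).
  { induction n0; simpl. reflexivity. simpl in IHn0. rewrite IHn0.
    change (Pr D (fun _ => False)) with (Pr D (fun _ : T => False)).
    rewrite Pr_empty. ring. }
  destruct n. lia. rewrite E. unfold R_dist. rewrite Rminus_diag, Rabs_R0. lra.
Qed.

Lemma Pr_mono T (D : distribution T) A B :
  meas D A -> meas D B -> (forall t, A t -> B t) -> Pr D A <= Pr D B.
Proof.
  intros HA HB Hs.
  rewrite (Pr_ext _ D B (fun t => A t \/ (B t /\ ~ A t))).
  2:{ intros t; split; [intros h; destruct (classic (A t)); tauto | intros [h|h]; auto; tauto]. }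
  rewrite Pr_add2; auto. 2: apply meas_inter; auto; apply meas_compl; auto.
  2: tauto.
  assert (0 <= Pr D (fun t => B t /\ ~ A t)) by
    (apply Pr_nonneg, meas_inter; auto; apply meas_compl; auto). lra.
Qed.

Lemma Pr_null_union T (D : distribution T) A B :
  meas D A -> meas D B -> Pr D A = 0 -> Pr D B = 0 -> Pr D (fun t => A t \/ B t) = 0.
Proof.
  intros HA HB H1 H2.
  rewrite (Pr_ext _ D _ (fun t => A t \/ (B t /\ ~ A t))) by
    (intros t; split; [intros h; destruct (classic (A t)); tauto | tauto]).
  assert (Hm : meas D (fun t => B t /\ ~ A t)) by (apply meas_inter; auto; apply meas_compl; auto).
  rewrite Pr_add2; auto. 2: tauto.
  assert (0 <= Pr D (fun t => B t /\ ~ A t)) by (apply Pr_nonneg; auto).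
  assert (Pr D (fun t => B t /\ ~ A t) <= Pr D B) by (apply Pr_mono; tauto). lra.
Qed.

Lemma Pr_compl T (D : distribution T) A :
  meas D A -> Pr D (fun t => ~ A t) = 1 - Pr D A.
Proof.
  intros HA. rewrite <- (Pr_full _ D).
  rewrite (Pr_ext _ D (fun _ => True) (fun t => A t \/ ~ A t)) by (intros t; split; [intros; apply classic| tauto]).
  rewrite Pr_add2; auto. ring. apply meas_compl; auto.
Qed.

Lemma rsum_ext n F G : (forall l, (l < n)%nat -> F l = G l) -> rsum n F = rsum n G.
Proof. induction n; simpl; intros H; auto. rewrite IHn, H; auto. Qed.

Lemma rsum_minus n F G : rsum n (fun l => F l - G l) = rsum n F - rsum n G.
Proof. induction n; simpl. ring. rewrite IHn; ring. Qed.

Lemma rsum_le n F G : (forall l, (l < n)%nat -> F l <= G l) -> rsum n F <= rsum n G.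
Proof. induction n; simpl; intros H. lra. assert (H1 := H n (Nat.lt_succ_diag_r n)).
  assert (rsum n F <= rsum n G) by (apply IHn; auto). lra. Qed.

Lemma rsum_abs n F : Rabs (rsum n F) <= rsum n (fun l => Rabs (F l)).
Proof. induction n; simpl. rewrite Rabs_R0; lra.
  eapply Rle_trans. apply Rabs_triang. lra. Qed.

Lemma rsum_scal n c F : rsum n (fun l => F l * c) = rsum n F * c.
Proof. induction n; simpl. ring. rewrite IHn; ring. Qed.

Lemma rsum_nonneg n F : (forall l, (l < n)%nat -> 0 <= F l) -> 0 <= rsum n F.
Proof. intros H. replace 0 with (rsum n (fun _ => 0)).
  apply rsum_le; auto. clear H. induction n; simpl; auto; lra. Qed.

Lemma rmax_ge m F j : (j < m)%nat -> F j <= rmax m F.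
Proof.
  induction m; intros H. lia.
  destruct m. simpl. assert (j = 0%nat) by lia. subst; lra.
  change (rmax (S (S m)) F) with (Rmax (rmax (S m) F) (F (S m))).
  destruct (Nat.eq_dec j (S m)). subst; apply Rmax_r.
  eapply Rle_trans. apply IHm; lia. apply Rmax_l.
Qed.

Lemma rmax_le m F e : 0 <= e -> (forall j, (j < m)%nat -> F j <= e) -> rmax m F <= e.
Proof.
  intros He. induction m; intros H. simpl; lra.
  destruct m. simpl. apply H; lia.
  change (rmax (S (S m)) F) with (Rmax (rmax (S m) F) (F (S m))).
  apply Rmax_lub. apply IHm; intros; apply H; lia. apply H; lia.
Qed.

Lemma rsum_sqexp n (w : nat -> R) t :
  rsum n (fun l => (Rabs (w l) - t) ^ 2) =
  rsum n (fun l => w l ^ 2) - 2 * t * rsum n (fun l => Rabs (w l)) + INR n * t ^ 2.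
Proof.
  induction n; cbn [rsum]. simpl; ring. rewrite IHn. rewrite S_INR.
  assert (Rabs (w n) ^ 2 = w n ^ 2) by (rewrite RPow_abs; apply Rabs_right, Rle_ge, pow2_ge_0).
  replace ((Rabs (w n) - t) ^ 2) with (Rabs (w n) ^ 2 - 2 * t * Rabs (w n) + t^2) by ring.
  rewrite H. ring.
Qed.

Lemma cauchy n (w : nat -> R) :
  rsum n (fun l => Rabs (w l)) <= sqrt (INR n) * sqrt (rsum n (fun l => w l ^ 2)).
Proof.
  set (Sm := rsum n (fun l => Rabs (w l))).
  set (Q := rsum n (fun l => w l ^ 2)).
  assert (HS : 0 <= Sm) by (apply rsum_nonneg; intros; apply Rabs_pos).
  assert (HQ : 0 <= Q) by (apply rsum_nonneg; intros; apply pow2_ge_0).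
  destruct n. unfold Sm; simpl; rewrite sqrt_0; lra.
  assert (Hn : 0 < INR (S n)) by (apply lt_0_INR; lia).
  assert (H := rsum_nonneg (S n) (fun l => (Rabs (w l) - Sm / INR (S n)) ^ 2)
    (fun l _ => pow2_ge_0 _)).
  rewrite rsum_sqexp in H. fold Sm Q in H.
  assert (Sm * Sm <= INR (S n) * Q).
  { replace (Q - 2 * (Sm / INR (S n)) * Sm + INR (S n) * (Sm / INR (S n)) ^ 2)
      with ((INR (S n) * Q - Sm * Sm) / INR (S n)) in H by (field; lra).
    apply Rmult_le_compat_r with (r := INR (S n)) in H; [|lra].
    unfold Rdiv in H. rewrite Rmult_0_l, Rmult_assoc, Rinv_l, Rmult_1_r in H; lra. }
  rewrite <- sqrt_mult by lra.
  rewrite <- (sqrt_square Sm) by lra. apply sqrt_le_1_alt. lra.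
Qed.

Lemma rho_up s : 0 <= 1 - rho s <= exp (- s) /\ 1 - rho s <= 1.
Proof.
  unfold rho. pose proof (exp_pos (- s)) as H.
  replace (1 - 1 / (1 + exp (- s))) with (exp (-s) / (1 + exp (-s))) by (field; lra).
  split; [split|].
  - unfold Rdiv; apply Rmult_le_pos; [lra | left; apply Rinv_0_lt_compat; lra].
  - apply Rmult_le_reg_r with (1 + exp (-s)); [lra|].
    unfold Rdiv; rewrite Rmult_assoc, Rinv_l by lra. nra.
  - apply Rmult_le_reg_r with (1 + exp (-s)); [lra|].
    unfold Rdiv; rewrite Rmult_assoc, Rinv_l by lra. nra.
Qed.

Lemma rho_low s : 0 <= rho s <= exp s /\ rho s <= 1.
Proof.
  unfold rho. pose proof (exp_pos (- s)) as H.
  assert (E : exp s * exp (- s) = 1) by (rewrite <- exp_plus; replace (s + - s) with 0 by ring; apply exp_0).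
  pose proof (exp_pos s).
  split; [split|].
  - unfold Rdiv; apply Rmult_le_pos; [lra | left; apply Rinv_0_lt_compat; lra].
  - apply Rmult_le_reg_r with (1 + exp (-s)); [lra|].
    unfold Rdiv; rewrite Rmult_assoc, Rinv_l by lra. nra.
  - apply Rmult_le_reg_r with (1 + exp (-s)); [lra|].
    unfold Rdiv; rewrite Rmult_assoc, Rinv_l by lra. nra.
Qed.

Lemma exp_le_exp' x y : x <= y -> exp x <= exp y.
Proof. intros [H|H]. left; apply exp_increasing; auto. subst; lra. Qed.

Lemma term_pos cs t delta : 0 < delta -> t > delta ->
  Rabs (rho (cs * t) - 1) <= exp (- (cs * delta)).
Proof.
  intros Hd Ht. destruct (rho_up (cs * t)) as [[H1 H2] H3].
  rewrite Rabs_left1 by lra.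
  destruct (Rle_or_lt 0 cs).
  - apply Rle_trans with (exp (- (cs * t))). lra.
    apply exp_le_exp'. nra.
  - assert (1 <= exp (- (cs * delta))).
    { rewrite <- exp_0. apply exp_le_exp'. nra. } lra.
Qed.

Lemma term_neg cs t delta : 0 < delta -> t < - delta ->
  Rabs (rho (cs * t) - 0) <= exp (- (cs * delta)).
Proof.
  intros Hd Ht. destruct (rho_low (cs * t)) as [[H1 H2] H3].
  rewrite Rminus_0_r, Rabs_right by lra.
  destruct (Rle_or_lt 0 cs).
  - apply Rle_trans with (exp (cs * t)). lra.
    apply exp_le_exp'. nra.
  - assert (1 <= exp (- (cs * delta))).
    { rewrite <- exp_0. apply exp_le_exp'. nra. } lra.
Qed.

Lemma b_mono (b : vec) k : (forall i, (i < k)%nat -> b i < b (S i)) ->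
  forall p q, (p <= q <= k)%nat -> b p <= b q.
Proof.
  intros H p q. induction q; intros Hq.
  - assert (p = 0%nat) by lia. subst; lra.
  - destruct (Nat.eq_dec p (S q)). subst; lra.
    assert (b p <= b q) by (apply IHq; lia). assert (b q < b (S q)) by (apply H; lia). lra.
Qed.

Lemma tele (f : nat -> nat -> R) y j n :
  rsum (S n) (fun l => Wmat f y l j) = f (y n) j.
Proof.
  induction n. simpl. ring.
  change (rsum (S (S n)) (fun l => Wmat f y l j)) with
    (rsum (S n) (fun l => Wmat f y l j) + Wmat f y (S n) j).
  rewrite IHn. simpl. ring.
Qed.

Definition ind (i l : nat) : R := if Nat.leb l i then 1 else 0.

Lemma tele_ind (f : nat -> nat -> R) y j i p :
  rsum (S i + p) (fun l => Wmat f y l j * ind i l) = f (y i) j.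
Proof.
  induction p.
  - rewrite Nat.add_0_r, <- (tele f y j i). apply rsum_ext.
    intros l Hl. unfold ind. replace (Nat.leb l i) with true. ring.
    symmetry; apply Nat.leb_le; lia.
  - rewrite Nat.add_succ_r. cbn [rsum]. rewrite IHp. unfold ind.
    replace (Nat.leb (S i + p) i) with false. ring.
    symmetry; apply Nat.leb_gt; lia.
Qed.

Lemma point_bound d k (f : nat -> nat -> R) y a b cs delta x i j :
  0 < delta -> (forall i, (i < k)%nat -> b i < b (S i)) -> (i < k)%nat ->
  b i + delta < dot d a x < b (S i) - delta ->
  Rabs (gnet d k f y a b cs x j - f (y i) j) <=
  exp (- (cs * delta)) * (sqrt (INR k) * colnorm k f y j).
Proof.
  intros Hd Hb Hi Hx.
  rewrite <- (tele_ind f y j i (k - S i)).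
  replace (S i + (k - S i))%nat with k by lia. unfold gnet. rewrite <- rsum_minus.
  eapply Rle_trans. apply rsum_abs.
  eapply Rle_trans.
  apply rsum_le with (G := fun l => Rabs (Wmat f y l j) * exp (- (cs * delta))).
  - intros l Hl.
    replace (Wmat f y l j * rho (cs * dot d a x - cs * b l) - Wmat f y l j * ind i l)
      with (Wmat f y l j * (rho (cs * (dot d a x - b l)) - ind i l))
      by (rewrite Rmult_minus_distr_l; f_equal; f_equal; f_equal; ring).
    rewrite Rabs_mult. apply Rmult_le_compat_l. apply Rabs_pos.
    unfold ind. destruct (Nat.leb l i) eqn:E.
    + apply Nat.leb_le in E. apply term_pos; auto.
      assert (b l <= b i) by (apply (b_mono b k Hb); lia). lra.
    + apply Nat.leb_gt in E. apply term_neg; auto.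
      assert (b (S i) <= b l) by (apply (b_mono b k Hb); lia). lra.
  - rewrite rsum_scal. rewrite Rmult_comm. apply Rmult_le_compat_l.
    left; apply exp_pos. apply cauchy.
Qed.

Theorem theorem1 (d c k m : nat) (X : vec -> Prop) (D : distribution sample)
  (delta : R) (a b : vec) (y : nat -> nat) (f : nat -> nat -> R) (eps : R) :
  distribution_on D X c ->
  k_separable_witness D X d c k delta a b y ->
  (* f : Y -> R^m injective *)
  (forall y1 y2, (1 <= y1 <= c)%nat -> (1 <= y2 <= c)%nat ->
     (forall j, (j < m)%nat -> f y1 j = f y2 j) -> y1 = y2) ->
  0 < maxcol k m f y ->
  0 < eps ->
  let cs := c_s k m f y delta eps in
  let E := fun z : sample =>
     rmax m (fun j => Rabs (gnet d k f y a b cs (fst z) j - f (snd z) j)) > eps in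
  meas D E ->
  Pr D E = 0.
Proof.
  intros _ Hsep _ HM Heps cs E HE.
  destruct Hsep as (Hd & _ & Hb & _ & Hi & HU).
  cbv zeta in Hi, HU. destruct HU as [HUm HU1].
  set (M := maxcol k m f y) in *.
  assert (Hk : (0 < k)%nat).
  { destruct k; [|lia]. exfalso.
    assert (M <= 0). { unfold M, maxcol. apply rmax_le. lra. intros j _.
      unfold colnorm; simpl. rewrite sqrt_0; lra. } lra. }
  assert (Hsk : 0 < sqrt (INR k)) by (apply sqrt_lt_R0, lt_0_INR; lia).
  assert (HZ : 0 < sqrt (INR k) * M / eps).
  { unfold Rdiv. apply Rmult_lt_0_compat. nra. apply Rinv_0_lt_compat; lra. }
  assert (Hexp : exp (- (cs * delta)) * (sqrt (INR k) * M) = eps).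
  { unfold cs, c_s. replace (/ delta * ln (sqrt (INR k) * maxcol k m f y / eps) * delta)
      with (ln (sqrt (INR k) * M / eps)) by (unfold M; field; lra).
    rewrite exp_Ropp, exp_ln by auto. field. split; lra. }
  assert (Key : forall z i, (i < k)%nat -> region d X a b delta i (fst z) ->
      snd z = y i -> ~ E z).
  { intros z i Hik [_ Hx] Hy HEz. unfold E in HEz.
    assert (rmax m (fun j => Rabs (gnet d k f y a b cs (fst z) j - f (snd z) j)) <= eps).
    { apply rmax_le. lra. intros j Hj. rewrite Hy.
      eapply Rle_trans. apply (point_bound d k f y a b cs delta (fst z) i j); auto.
      rewrite <- Hexp. apply Rmult_le_compat_l. left; apply exp_pos.
      apply Rmult_le_compat_l. lra. unfold M, maxcol. apply (rmax_ge m (colnorm k f y)); auto. }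
    lra. }
  set (Xi := fun i (z : sample) => region d X a b delta i (fst z)).
  set (bad := fun i (z : sample) => Xi i z /\ ~ (Xi i z /\ snd z = y i)).
  set (U := fun z : sample => exists i, (i < k)%nat /\ region d X a b delta i (fst z)) in *.
  set (N := fun n z => ~ U z \/ exists i, (i < n)%nat /\ bad i z).
  assert (Hbad : forall i, (i < k)%nat -> meas D (bad i) /\ Pr D (bad i) = 0).
  { intros i Hik. destruct (Hi i Hik) as (HXm & HXYm & Hr).
    assert (Hbm : meas D (bad i)) by (apply meas_inter; auto; apply meas_compl; auto).
    split; auto.
    assert (Hsplit : Pr D (Xi i) = Pr D (fun z => Xi i z /\ snd z = y i) + Pr D (bad i)).
    { rewrite <- Pr_add2; auto. apply Pr_ext. intros z; unfold bad; split.
      intros h; destruct (classic (snd z = y i)); tauto. tauto. unfold bad; tauto. }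
    assert (0 <= Pr D (bad i)) by (apply Pr_nonneg; auto).
    assert (0 <= Pr D (fun z => Xi i z /\ snd z = y i)) by (apply Pr_nonneg; auto).
    destruct (Rlt_or_le 0 (Pr D (Xi i))) as [Hp|Hp].
    - specialize (Hr Hp). fold (Xi i) in Hr.
      assert (Pr D (fun z => Xi i z /\ snd z = y i) = Pr D (Xi i)).
      { apply (Rmult_eq_reg_r (/ Pr D (Xi i))). rewrite Rinv_r by lra. exact Hr.
        apply Rinv_neq_0_compat; lra. }
      lra.
    - lra. }
  assert (HN : forall n, (n <= k)%nat -> meas D (N n) /\ Pr D (N n) = 0).
  { induction n; intros Hn.
    - assert (Hc : meas D (fun z => ~ U z)) by (apply meas_compl; auto).
      assert (Hext : forall z, (fun z => ~ U z) z <-> N 0%nat z).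
      { intros z; unfold N; split. tauto. intros [h|[i [h _]]]; auto; lia. }
      split. apply (meas_ext _ D _ _ Hext Hc).
      rewrite <- (Pr_ext _ D _ _ Hext). rewrite Pr_compl; auto. lra.
    - destruct IHn as [H1 H2]. lia. destruct (Hbad n) as [H3 H4]. lia.
      assert (Hext : forall z, (fun z => N n z \/ bad n z) z <-> N (S n) z).
      { intros z; unfold N; split.
        - intros [[h|[i [h1 h2]]]|h]; auto. right; exists i; split; auto.
          right; exists n; auto.
        - intros [h|[i [h1 h2]]]; auto. destruct (Nat.eq_dec i n). subst i; auto.
          left; right; exists i; split; auto; lia. }
      split. apply (meas_ext _ D _ _ Hext). apply meas_union2; auto.
      rewrite <- (Pr_ext _ D _ _ Hext). apply Pr_null_union; auto. }
  destruct (HN k (le_n k)) as [HNm HN0].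
  assert (Pr D E <= Pr D (N k)).
  { apply Pr_mono; auto. intros z HEz. unfold N.
    destruct (classic (U z)) as [HUz|HUz]; auto.
    right. destruct HUz as [i [Hik Hx]]. exists i; split; auto.
    unfold bad, Xi. split; auto. intros [_ Hy]. exact (Key z i Hik Hx Hy HEz). }
  assert (0 <= Pr D E) by (apply Pr_nonneg; auto). lra.
Qed.
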